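(* Let $\mathbf{X}\in\mathbb{R}^{m\times n}_+$ be a nonnegative matrix with no zero row and no zero column, and let $\mathbf{x}_1,\dots,\mathbf{x}_m\in\mathbb{R}^n_+$ be the columns of $\mathbf{X}^\top$ (the rows of $\mathbf{X}$). Let $\mathbf{U}^\star=[\mathbf{u}_1,\dots,\mathbf{u}_c]\in\mathbb{R}^{n\times c}$ be the matrix whose columns are generators of the (pairwise distinct) extreme rays of $\operatorname{cone}(\mathbf{X}^\top)$, and let $\boldsymbol{\mu}=\frac{1}{m}\sum_{i=1}^m\mathbf{x}_i$. If $c\ge 2$, then for every $k\in\{1,\dots,c\}$ there is no scalar $\tau$ with $\boldsymbol{\mu}=\tau\,\mathbf{u}_k$; i.e. no extreme ray of $\operatorname{cone}(\mathbf{X}^\top)$ is colinear with the mean $\boldsymbol{\mu}$.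
   Context: $\operatorname{cone}(\mathbf{X}^\top):=\{\mathbf{X}^\top\boldsymbol{\alpha}:\boldsymbol{\alpha}\ge 0\}\subseteq\mathbb{R}^n$. A ray $\mathbb{R}_+\mathbf{u}\subseteq\operatorname{cone}(\mathbf{X}^\top)$ (with $\mathbf{u}\neq 0$) is extreme if whenever $\mathbf{u}=\mathbf{v}+\mathbf{w}$ with $\mathbf{v},\mathbf{w}\in\operatorname{cone}(\mathbf{X}^\top)$, then $\mathbf{v}=a\mathbf{u}$ and $\mathbf{w}=b\mathbf{u}$ for some $a,b\ge 0$. *)

(* Defs.v *)
From HB Require Import structures.
From mathcomp Require Import all_boot all_order all_algebra.
Set Implicit Arguments. Unset Strict Implicit. Unset Printing Implicit Defensive.
Import Order.TTheory GRing.Theory Num.Theory.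
Local Open Scope ring_scope.

(* The rows of
   X : 'M_(m,n) are the x_i = columns of X^T.
   cone(X^T) = { X^T alpha : alpha >= 0 }; as row vectors this is
   { alpha *m X : alpha : 'rV_m, alpha >= 0 entrywise }. *)
Definition in_cone (R : realFieldType) (m n : nat) (X : 'M[R]_(m, n))
  (v : 'rV[R]_n) : Prop :=
  exists alpha : 'rV[R]_m, (forall i, 0 <= alpha 0 i) /\ v = alpha *m X.

Definition extreme_ray (R : realFieldType) (m n : nat) (X : 'M[R]_(m, n))
  (u : 'rV[R]_n) : Prop :=
  u != 0 /\ in_cone X u /\
  forall v w, in_cone X v -> in_cone X w -> u = v + w ->
    exists a b : R, [/\ 0 <= a, 0 <= b, v = a *: u & w = b *: u].

Definition same_ray (R : realFieldType) (n : nat) (u u' : 'rV[R]_n) : Prop :=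
  exists a : R, 0 < a /\ u' = a *: u.

Definition row_mean (R : realFieldType) (m n : nat) (X : 'M[R]_(m, n)) : 'rV[R]_n :=
  (m%:R)^-1 *: \sum_(i < m) row i X.

(* Main.v *)
Require Import Defs.
From HB Require Import structures.
From mathcomp Require Import all_boot all_order all_algebra.
Import Order.TTheory GRing.Theory Num.Theory.
Local Open Scope ring_scope.

Lemma cone_ge0 (R : realFieldType) (m n : nat) (X : 'M[R]_(m, n)) v :
  (forall i j, 0 <= X i j) -> in_cone X v -> forall j, 0 <= v 0 j.
Proof.
move=> X0 [a [a0 ->]] j; rewrite mxE; apply: sumr_ge0 => i _.
exact: mulr_ge0.
Qed.

Lemma sum_rows (R : realFieldType) (m n : nat) (X : 'M[R]_(m, n)) :
  \sum_(i < m) row i X = const_mx 1 *m X.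
Proof.
apply/rowP => j; rewrite !mxE summxE; apply: eq_bigr => i _.
by rewrite !mxE mul1r.
Qed.

Theorem lemma4p1 (R : realFieldType) (m n c : nat) (X : 'M[R]_(m, n))
  (U : 'I_c -> 'rV[R]_n) :
  (forall i j, 0 <= X i j) ->
  (forall i, row i X != 0) ->
  (forall j, col j X != 0) ->
  (* each U k generates an extreme ray *)
  (forall k, extreme_ray X (U k)) ->
  (* the rays are pairwise distinct *)
  (forall k l, k != l -> ~ same_ray (U k) (U l)) ->
  (* every extreme ray is generated by some U k *)
  (forall u, extreme_ray X u -> exists k, same_ray (U k) u) ->
  (2 <= c)%N ->
  forall k : 'I_c, ~ exists tau : R, row_mean X = tau *: U k.
Proof.
move=> X0 Xr Xc Uext Udist Uall c2 k [tau Htau].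
have XnZ : X != 0.
  apply/eqP => XZ; have [Uk0 [[a [_ Ha]] _]] := Uext k.
  by move: Uk0; rewrite Ha XZ mulmx0 eqxx.
have mpos : (0 < m)%N.
  case: (posnP m) => // m0; subst m.
  by move: XnZ; rewrite (flatmx0 X) eqxx.
have mR : 0 < m%:R :> R by rewrite ltr0n.
have [Uk0 [Ukc Ukext]] := Uext k.
have tpos : 0 < tau.
  rewrite ltNge; apply/negP => tle0.
  have mu0 : row_mean X = 0.
    apply/rowP => j; apply/eqP; rewrite eq_le; apply/andP; split.
      by rewrite Htau !mxE; apply: mulr_le0_ge0 => //; exact: cone_ge0 Ukc j.
    rewrite !mxE; apply: mulr_ge0; first by rewrite invr_ge0 ler0n.
    rewrite summxE; apply: sumr_ge0 => i _; rewrite mxE; exact: X0.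
  have sum0 : \sum_(i < m) row i X = 0.
    move: mu0; rewrite /row_mean => /eqP; rewrite scaler_eq0 invr_eq0.
    by rewrite (negbTE (lt0r_neq0 mR)) /= => /eqP.
  apply: (negP XnZ); apply/eqP/matrixP => i j; rewrite mxE.
  have := congr1 (fun M : 'rV_n => M 0 j) sum0; rewrite /= summxE mxE => H.
  have := @psumr_eq0P R _ predT (fun i' => row i' X 0 j) _ H i isT.
  by rewrite mxE; apply => i' _; rewrite mxE.
pose s := (tau * m%:R)^-1.
have spos : 0 < s by rewrite invr_gt0 mulr_gt0.
have UkE : U k = (s *: const_mx 1) *m X.
  rewrite -scalemxAl -sum_rows /s invfM -scalerA -/(row_mean X) Htau scalerA.
  by rewrite mulVf ?scale1r // lt0r_neq0.
have rowsM : forall i, exists ci : R, 0 <= ci /\ row i X = ci *: U k.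
  move=> i.
  have H1 : in_cone X ((s *: 'e_i) *m X).
    exists (s *: 'e_i); split => // j; rewrite !mxE.
    by apply: mulr_ge0; [exact: ltW | case: (_ == _)].
  have H2 : in_cone X ((s *: (const_mx 1 - 'e_i)) *m X).
    exists (s *: (const_mx 1 - 'e_i)); split => // j; rewrite !mxE.
    apply: mulr_ge0; first exact: ltW.
    by case: (j == i); rewrite /= ?subrr ?subr0.
  have H3 : U k = (s *: 'e_i) *m X + (s *: (const_mx 1 - 'e_i)) *m X.
    by rewrite -mulmxDl -scalerDr addrC subrK.
  have [a [b [a0 b0 Hv Hw]]] := Ukext _ _ H1 H2 H3.
  exists (s^-1 * a); split; first by apply: mulr_ge0 => //; rewrite invr_ge0 ltW.
  rewrite -scalerA -Hv -scalemxAl scalerA mulVf ?scale1r ?rowE //.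
  exact: lt0r_neq0.
have [cf Hc] := fin_all_exists rowsM.
pose l : 'I_c := if val k == 0%N then Ordinal c2 else Ordinal (leq_trans (isT : (0 < 2)%N) c2).
have lk : k != l.
  apply/negP => /eqP /(congr1 val); rewrite /l; case: (val k =P 0%N) => /= k0 kv.
    by move: k0; rewrite kv.
  by apply: k0.
have [Ul0 [[be [be0 Hbe]] _]] := Uext l.
apply: (Udist k l lk).
have Hsum : U l = (\sum_i (be 0 i * cf i)) *: U k.
  rewrite Hbe mulmx_sum_row scaler_suml; apply: eq_bigr => i _.
  by have [_ ->] := Hc i; rewrite scalerA.
exists (\sum_i (be 0 i * cf i)); split => //.
rewrite lt0r; apply/andP; split; last first.
  by apply: sumr_ge0 => i _; apply: mulr_ge0 => //; have [] := Hc i.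
apply/eqP => S0; move: Ul0; by rewrite Hsum S0 scale0r eqxx.
Qed.
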